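(* Assume (R). Then for all integers $r,s\ge0$, $$(-1)^rA_{r,s}(x)=(-1)^sA_{s,r}(-x).$$
   Context: Let $(\alpha_n)_{n\ge0}$ be an arbitrary sequence of complex numbers; its Appell polynomials are $A_n(x)=\sum_{\nu=0}^{n}\binom{n}{\nu}\alpha_{n-\nu}x^\nu$. For $r,s\ge0$ define $A_{r,s}(x)=\sum_{\nu=0}^{r}\binom{r}{\nu}A_{s+\nu}(x)$ (umbrally $(A(x)+1)^rA(x)^s$). Property (R) means $A_n(1-x)=(-1)^nA_n(x)$ for all $n\ge0$. *)

(* Defs.v *)
From HB Require Import structures.
From mathcomp Require Import all_boot all_order all_algebra.
From mathcomp Require Import complex.
From mathcomp Require Import Rstruct.
Set Implicit Arguments. Unset Strict Implicit. Unset Printing Implicit Defensive.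
Import Order.TTheory GRing.Theory Num.Theory.
Local Open Scope ring_scope.

Notation Cplx := (Rdefinitions.R [i])%type.

Definition appell (alpha : nat -> Cplx) (n : nat) (x : Cplx) : Cplx :=
  \sum_(0 <= nu < n.+1) (alpha (n - nu)%N *+ 'C(n, nu)) * x ^+ nu.

Definition appell2 (alpha : nat -> Cplx) (r s : nat) (x : Cplx) : Cplx :=
  \sum_(0 <= nu < r.+1) appell alpha (s + nu) x *+ 'C(r, nu).

Definition propR (alpha : nat -> Cplx) : Prop :=
  forall (n : nat) (x : Cplx), appell alpha n (1 - x) = (-1) ^+ n * appell alpha n x.

(* Main.v *)
Require Import Defs.
From mathcomp Require Import all_boot all_order all_algebra.
From mathcomp Require Import complex Rstruct.
From mathcomp Require Import ring zify.
Local Open Scope ring_scope.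
Import GRing.Theory.

Lemma sum_ext0 (F : nat -> Cplx) a b c : (a <= b)%N -> (b <= c)%N ->
  (forall i, (b <= i)%N -> (i < c)%N -> F i = 0) ->
  \sum_(a <= i < c) F i = \sum_(a <= i < b) F i.
Proof.
move=> hab hbc H; rewrite (big_cat_nat hab hbc) /=.
have -> : \sum_(b <= i < c) F i = 0.
  by rewrite big_nat_cond big1 // => i /andP[/andP[h1 h2] _]; exact: H.
by rewrite addr0.
Qed.

Lemma bin_id (n m j : nat) : (m + j <= n)%N ->
  ('C(n, n - m) * 'C(n - m, j) = 'C(m + j, j) * 'C(n, m + j))%N.
Proof.
move=> h.
have hm : (m <= n)%N by apply: leq_trans h; apply: leq_addr.
rewrite bin_sub //.
apply/eqP; rewrite -(eqn_pmul2r (fact_gt0 m)) -(eqn_pmul2r (fact_gt0 j))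
  -(eqn_pmul2r (fact_gt0 (n - m - j))); apply/eqP.
have e1 : (n - m - j = n - (m + j))%N by rewrite subnDA.
have h1 := bin_fact hm.
have h2 : (j <= n - m)%N by rewrite leq_subRL // addnC.
have h3 := bin_fact h2.
have h4 := bin_fact h.
have h5 := bin_fact (leq_addl m j).
rewrite addnK in h5.
rewrite -e1 in h4.
transitivity ('C(n, m) * (m`! * (n - m)`!))%N; last first.
  rewrite h1 -h4 -h5; ring.
rewrite -h3; ring.
Qed.

Lemma shift (a : nat -> Cplx) (n : nat) (y : Cplx) :
  appell a n (y + 1) = \sum_(0 <= nu < n.+1) appell a nu y *+ 'C(n, nu).
Proof.
rewrite /appell.
transitivity (\sum_(0 <= i < n.+1) \sum_(0 <= j < n.+1)
   (a (n - i)%N * y ^+ j) *+ ('C(n, i) * 'C(i, j))).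
  apply: eq_big_nat => i /andP[_ hi].
  rewrite exprD1n -(big_mkord xpredT (fun j => y ^+ j *+ 'C(i, j))).
  rewrite [in RHS](sum_ext0 _ 0 i.+1 n.+1) //; last first.
    by move=> k hk _; rewrite (bin_small hk) muln0 mulr0n.
  rewrite mulr_sumr; apply: eq_bigr => j _; by rewrite mulrnAr mulrnAl -mulrnA.
transitivity (\sum_(0 <= i < n.+1) \sum_(0 <= j < n.+1)
   (a (i - j)%N * y ^+ j) *+ ('C(i, j) * 'C(n, i))); last first.
  apply: eq_big_nat => i /andP[_ hi].
  rewrite [in LHS](sum_ext0 _ 0 i.+1 n.+1) //; last first.
    by move=> k hk _; rewrite (bin_small hk) mul0n mulr0n.
  rewrite -sumrMnl; apply: eq_bigr => j _; by rewrite mulrnAl -mulrnA mulnC.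
rewrite exchange_big_nat [in RHS]exchange_big_nat.
apply: eq_big_nat => j /andP[_ hj].
under eq_bigr do rewrite -mulrnAl.
under [in RHS]eq_bigr do rewrite -mulrnAl.
rewrite -!mulr_suml; congr (_ * _).
rewrite big_nat_rev /= add0n.
under eq_bigr do rewrite subSS.
rewrite (sum_ext0 _ 0 (n.+1 - j)%N n.+1) ?leq_subr //; last first.
  move=> k hk hk'; rewrite [X in ('C(_, _) * X)%N]bin_small ?muln0 ?mulr0n //.
  lia.
rewrite [in RHS](big_cat_nat (n := j) (leq0n j) (ltnW hj)) /=.
have -> : \sum_(0 <= i < j) a (i - j)%N *+ ('C(i, j) * 'C(n, i)) = 0.
  rewrite big_nat_cond big1 //.
  by move=> i /andP[/andP[_ hi] _]; rewrite (bin_small hi) mul0n mulr0n.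
rewrite add0r -[in RHS](add0n j) big_addn.
apply: eq_big_nat => i /andP[_ hi].
have hij : (i + j <= n)%N by lia.
rewrite add0n addnK -bin_id //.
by have -> : (n - (n - i) = i)%N by lia.
Qed.

Lemma pascal a r s x :
  appell2 a r.+1 s x = appell2 a r s x + appell2 a r s.+1 x.
Proof.
rewrite /appell2 big_nat_recl // bin0.
under eq_bigr do rewrite binS mulrnDr.
rewrite big_split /= [in RHS]big_nat_recl // bin0.
have h1 : \sum_(0 <= i < r.+1) appell a (s + i.+1) x *+ 'C(r, i.+1)
   = \sum_(0 <= i < r) appell a (s + i.+1) x *+ 'C(r, i.+1).
  by rewrite big_nat_recr //= bin_small // mulr0n addr0.
have h2 : \sum_(0 <= i < r.+1) appell a (s + i.+1) x *+ 'C(r, i)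
   = \sum_(0 <= i < r.+1) appell a (s.+1 + i) x *+ 'C(r, i).
  by apply: eq_bigr => i _; rewrite addnS.
rewrite h1 h2; ring.

Qed.

Theorem mainTheorem7 (alpha : nat -> Cplx) (hR : propR alpha) (r s : nat) (x : Cplx) :
  (-1) ^+ r * appell2 alpha r s x = (-1) ^+ s * appell2 alpha s r (- x).
Proof.
elim: r s => [|r IH] s.
  rewrite expr0 mul1r /appell2 big_nat1 bin0 addn0 mulr1n.
  have := shift alpha s (- x).
  rewrite addrC -/(1 - x) hR /appell2 => <-.
  by rewrite mulrA -exprMn mulrNN mulr1 expr1n mul1r.
have P := pascal alpha s r (- x).
have e : appell2 alpha s r.+1 (- x) = appell2 alpha s.+1 r (- x) - appell2 alpha s r (- x).
  by rewrite P addrAC subrr add0r.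
have h1 := IH s; have h2 := IH s.+1.
move: h1 h2; rewrite (pascal alpha r s x) e !exprS.
move: (appell2 alpha r s x) (appell2 alpha r s.+1 x) (appell2 alpha s r (-x))
  (appell2 alpha s.+1 r (-x)) ((-1) ^+ r : Cplx) ((-1) ^+ s : Cplx) => a1 a2 b1 b2 c d h1 h2.
have -> : -1 * c * (a1 + a2) = - (c * a1) - (c * a2) by ring.
rewrite h1 h2; ring.
Qed.
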